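(* Let $\mathrm{FOV}_{\min}\in(0,\pi/2]$, $L_{\max}>0$ and $A_{\max}>0$. Then the set $\mathcal S=\{(B,\mathrm{FOV}): B>0,\ \mathrm{FOV}\in(0,\pi/2],\ \mathrm{FOV}\ge\mathrm{FOV}_{\min},\ L_{\mathrm{ADR}}(B,\mathrm{FOV})\le L_{\max},\ A_{\mathrm{ADR}}(B,\mathrm{FOV})\le A_{\max}\}$ equals $\{(B,\mathrm{FOV}): B>0,\ \mathrm{FOV}\in(0,\pi/2],\ \mathrm{FOV}\ge f_{\mathrm{FOV}}(B)\}$, where $f_{\mathrm{FOV}}(B)=\max\{\mathrm{FOV}_{\min},\,f_{\mathrm L}^{-1}(B),\,f_{\mathrm A}^{-1}(B)\}$. Consequently, maximising $R(B,\mathrm{FOV})$ over $\mathcal S$ is the same problem as maximising $R(B,\mathrm{FOV})$ subject to the single constraint $\mathrm{FOV}\ge f_{\mathrm{FOV}}(B)$ (with $B>0$, $\mathrm{FOV}\in(0,\pi/2]$).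
   Context: Fix constants: an integer $N_{\mathrm{tier}}\ge1$; an integer $N_{\mathrm{PD}}\ge 1$; $\mathrm{FF}\in(0,1]$; $K_{\mathrm{PD}}>0$; $n_{\mathrm{CPC}}\ge 1$; $P_{\mathrm t}>0$; $w>0$; $R_{\mathrm{PD}}>0$; $\Gamma>0$; $N_0>0$. The design variables are $B>0$ and $\mathrm{FOV}\in(0,\pi/2]$. Write $\theta=\theta_{\mathrm{CPC}}=\mathrm{FOV}/(2N_{\mathrm{tier}}+1)$. Define $D_2(B)=\frac{1}{K_{\mathrm{PD}}B}\sqrt{N_{\mathrm{PD}}/\mathrm{FF}}$, $D_1(B,\mathrm{FOV})=D_2(B)\,\frac{n_{\mathrm{CPC}}}{\sin\theta}$, $P_{\mathrm r}(B,\mathrm{FOV})=\mathrm{FF}\,P_{\mathrm t}\Big(1-\exp\Big(-\frac{D_1(B,\mathrm{FOV})^2}{2w^2}\Big)\Big)$, and the achievable rate $R(B,\mathrm{FOV})=B\log_2\Big(1+\frac{(R_{\mathrm{PD}}P_{\mathrm r}(B,\mathrm{FOV}))^2}{\Gamma N_0 B}\Big)$. Set $K_1=\frac{1}{2K_{\mathrm{PD}}}\sqrt{N_{\mathrm{PD}}/\mathrm{FF}}$ and $K_2=\frac{\pi N_{\mathrm{PD}}n_{\mathrm{CPC}}^2}{4\,\mathrm{FF}\,K_{\mathrm{PD}}^2}$, and define $L_{\mathrm{ADR}}(B,\mathrm{FOV})=\frac{K_1}{B}\cdot\frac{n_{\mathrm{CPC}}+\sin\theta}{\sin\theta\,\tan\theta}$,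 $A_{\mathrm{ADR}}(B,\mathrm{FOV})=\frac{K_2}{B^2\sin^2\theta}\Big(1+\sum_{i=1}^{N_{\mathrm{tier}}}6i\cos(2i\theta)\Big)$. Given $L_{\max},A_{\max}>0$, define for $\mathrm{FOV}\in(0,\pi/2]$ the boundary functions (the value of $B$ at which the respective dimension constraint holds with equality) $f_{\mathrm L}(\mathrm{FOV})=\frac{K_1}{L_{\max}}\cdot\frac{n_{\mathrm{CPC}}+\sin\theta}{\sin\theta\tan\theta}$ and $f_{\mathrm A}(\mathrm{FOV})=\frac{1}{\sin\theta}\sqrt{\frac{K_2}{A_{\max}}\Big(1+\sum_{i=1}^{N_{\mathrm{tier}}}6i\cos(2i\theta)\Big)}$, and their (generalised) inverses $f_{\mathrm L}^{-1}(B)=\inf\{\mathrm{FOV}\in(0,\pi/2]: f_{\mathrm L}(\mathrm{FOV})\le B\}$ and $f_{\mathrm A}^{-1}(B)=\inf\{\mathrm{FOV}\in(0,\pi/2]: f_{\mathrm A}(\mathrm{FOV})\le B\}$, with the convention $\inf\emptyset=+\infty$. *)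

(* Defs.v *)
(* concrete classical reals R, with Coquelicot's extended reals Rbar
   (needed because the generalised inverses may equal +infinity). *)
From Stdlib Require Import Reals Lra.
From Coquelicot Require Import Coquelicot.
Open Scope R_scope.

Definition theta_cpc (Ntier : nat) (FOV : R) : R := FOV / (2 * INR Ntier + 1).

Fixpoint tier_sum (Ntier : nat) (th : R) : R :=
  match Ntier with
  | O => 0
  | S n => tier_sum n th + 6 * INR (S n) * cos (2 * INR (S n) * th)
  end.

Definition K1 (NPD FF KPD : R) : R := / (2 * KPD) * sqrt (NPD / FF).
Definition K2 (NPD FF KPD nCPC : R) : R := PI * NPD * nCPC ^ 2 / (4 * FF * KPD ^ 2).

Definition D2 (NPD FF KPD B : R) : R := / (KPD * B) * sqrt (NPD / FF).
Definition D1 (Ntier : nat) (NPD FF KPD nCPC B FOV : R) : R :=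
  D2 NPD FF KPD B * (nCPC / sin (theta_cpc Ntier FOV)).
Definition Pr (Ntier : nat) (NPD FF KPD nCPC Pt w B FOV : R) : R :=
  FF * Pt * (1 - exp (- (D1 Ntier NPD FF KPD nCPC B FOV ^ 2 / (2 * w ^ 2)))).
Definition log2 (x : R) : R := ln x / ln 2.
Definition rate (Ntier : nat) (NPD FF KPD nCPC Pt w RPD Gamma N0 B FOV : R) : R :=
  B * log2 (1 + (RPD * Pr Ntier NPD FF KPD nCPC Pt w B FOV) ^ 2 / (Gamma * N0 * B)).

Definition L_ADR (Ntier : nat) (NPD FF KPD nCPC B FOV : R) : R :=
  let th := theta_cpc Ntier FOV in
  K1 NPD FF KPD / B * ((nCPC + sin th) / (sin th * tan th)).
Definition A_ADR (Ntier : nat) (NPD FF KPD nCPC B FOV : R) : R :=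
  let th := theta_cpc Ntier FOV in
  K2 NPD FF KPD nCPC / (B ^ 2 * sin th ^ 2) * (1 + tier_sum Ntier th).

Definition f_L (Ntier : nat) (NPD FF KPD nCPC Lmax FOV : R) : R :=
  let th := theta_cpc Ntier FOV in
  K1 NPD FF KPD / Lmax * ((nCPC + sin th) / (sin th * tan th)).
Definition f_A (Ntier : nat) (NPD FF KPD nCPC Amax FOV : R) : R :=
  let th := theta_cpc Ntier FOV in
  / sin th * sqrt (K2 NPD FF KPD nCPC / Amax * (1 + tier_sum Ntier th)).

(* generalised inverse: inf {FOV in (0,pi/2] : f FOV <= B}, as an element of Rbar;
   the greatest lower bound (Glb_Rbar) of the empty set is p_infty (see gen_inv_empty). *)
Definition gen_inv (f : R -> R) (B : R) : Rbar :=
  Glb_Rbar (fun FOV => 0 < FOV <= PI / 2 /\ f FOV <= B).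

Lemma gen_inv_empty (f : R -> R) (B : R) :
  (forall FOV, ~ (0 < FOV <= PI / 2 /\ f FOV <= B)) -> gen_inv f B = p_infty.
Proof.
  intros H. unfold gen_inv. apply is_glb_Rbar_unique. split.
  - intros x Hx. exfalso. exact (H x Hx).
  - intros l _. destruct l; simpl; auto.
Qed.

Definition Rbar_max2 (a b : Rbar) : Rbar := if Rbar_le_dec a b then b else a.

(* Main.v *)
Require Import Defs.
From Stdlib Require Import Reals Lra.
From Coquelicot Require Import Coquelicot.
Open Scope R_scope.

Lemma tier_ex_derive n t : ex_derive (fun x => tier_sum n x) t.
Proof.
  induction n as [|n IH]; simpl.
  - apply ex_derive_const.
  - apply (ex_derive_plus (fun x => tier_sum n x)
      (fun x => 6 * INR (S n) * cos (2 * INR (S n) * x))); [exact IH|].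
    auto_derive; auto.
Qed.

Lemma tier_mono n a b : 0 <= a -> a <= b -> 2 * INR n * b <= PI / 2 ->
  tier_sum n b <= tier_sum n a /\ 0 <= tier_sum n b.
Proof.
  intros Ha Hab. induction n as [|n IH]; intros Hb; cbn [tier_sum].
  - lra.
  - assert (HS : INR n <= INR (S n)) by (apply le_INR; auto).
    assert (Hn : 0 <= INR n) by apply pos_INR.
    assert (HPI := PI_RGT_0).
    destruct IH as [IH1 IH2]; [nra|].
    assert (0 <= 2 * INR (S n) * a) by nra.
    assert (2 * INR (S n) * a <= 2 * INR (S n) * b) by nra.
    assert (cos (2 * INR (S n) * b) <= cos (2 * INR (S n) * a))
      by (apply cos_decr_1; lra).
    assert (0 <= cos (2 * INR (S n) * b)) by (apply cos_ge_0; lra).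
    assert (0 <= INR (S n)) by lra.
    split; [|apply Rplus_le_le_0_compat; [lra| apply Rmult_le_pos; lra]].
    apply Rplus_le_compat; [lra|]. apply Rmult_le_compat_l; lra.
Qed.

Lemma div_le_cross x y u v : 0 < y -> 0 < v -> x * v <= u * y -> x / y <= u / v.
Proof.
  intros Hy Hv H. apply Rmult_le_reg_r with (y * v); [nra|].
  replace (x / y * (y * v)) with (x * v) by (field; lra).
  replace (u / v * (y * v)) with (u * y) by (field; lra). exact H.
Qed.

Lemma div_swap x B M : 0 < B -> 0 < M -> (x / B <= M <-> x / M <= B).
Proof.
  intros HB HM. split; intros H.
  - apply Rmult_le_reg_r with M; auto.
    replace (x / M * M) with x by (field; lra).
    apply Rmult_le_reg_r with (/ B); [apply Rinv_0_lt_compat; lra|].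
    replace (B * M * / B) with M by (field; lra). exact H.
  - apply Rmult_le_reg_r with B; auto.
    replace (x / B * B) with x by (field; lra).
    apply Rmult_le_reg_r with (/ M); [apply Rinv_0_lt_compat; lra|].
    replace (M * B * / M) with B by (field; lra). exact H.
Qed.

Lemma gen_inv_char (f : R -> R) B x :
  (forall a b, 0 < a -> a <= b -> b <= PI / 2 -> f b <= f a) ->
  continuity_pt f x -> 0 < x <= PI / 2 ->
  (Rbar_le (gen_inv f B) (Finite x) <-> f x <= B).
Proof.
  intros Hm Hc Hx. destruct (Glb_Rbar_correct
    (fun FOV => 0 < FOV <= PI / 2 /\ f FOV <= B)) as [Hlb Hglb].
  unfold gen_inv. split.
  - intros H. destruct (Rle_dec (f x) B) as [|Hn]; auto. exfalso.
    apply Rnot_le_lt in Hn.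
    destruct (Hc (f x - B)) as [alp [Halp Hd]]; [lra|].
    assert (Hl : is_lb_Rbar (fun FOV => 0 < FOV <= PI / 2 /\ f FOV <= B)
                  (Finite (x + alp / 2))).
    { intros y [Hy Hfy]. simpl.
      destruct (Rle_dec y x) as [Hyx|Hyx].
      { assert (f x <= f y) by (apply Hm; lra). lra. }
      destruct (Rle_dec (x + alp / 2) y) as [|Hy2]; auto. exfalso.
      assert (Hdd : R_dist (f y) (f x) < f x - B).
      { apply Hd. split. split; [exact I| lra].
        change (R_dist y x < alp). unfold R_dist. rewrite Rabs_right; lra. }
      unfold R_dist in Hdd. apply Rabs_def2 in Hdd. lra. }
    specialize (Hglb _ Hl).
    assert (Hc2 := Rbar_le_trans _ _ _ Hglb H). simpl in Hc2. lra.
  - intros H. apply Hlb. split; auto.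
Qed.

Lemma max2_le a b c : Rbar_le (Rbar_max2 a b) c <-> Rbar_le a c /\ Rbar_le b c.
Proof.
  unfold Rbar_max2. destruct (Rbar_le_dec a b) as [H|H]; split.
  - intros Hb; split; auto. eapply Rbar_le_trans; eauto.
  - intros [_ Hb]; auto.
  - intros Ha; split; auto. eapply Rbar_le_trans; [|exact Ha].
    apply Rbar_lt_le, Rbar_not_le_lt; auto.
  - intros [Ha _]; auto.
Qed.

Section Aux.
Variables (Ntier : nat) (NPD FF KPD nCPC Lmax Amax : R).
Hypotheses (HNtier : (1 <= Ntier)%nat) (HNPD : 1 <= NPD) (HFF : 0 < FF <= 1)
  (HKPD : 0 < KPD) (HnCPC : 1 <= nCPC) (HLmax : 0 < Lmax) (HAmax : 0 < Amax).

Lemma d_ge3 : 3 <= 2 * INR Ntier + 1.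
Proof. assert (1 <= INR Ntier) by (apply (le_INR 1); auto). simpl in *; lra. Qed.

Lemma th_range x : 0 < x <= PI / 2 ->
  0 < theta_cpc Ntier x <= PI / 6 /\
  2 * INR Ntier * theta_cpc Ntier x <= PI / 2.
Proof.
  intros Hx. assert (H3 := d_ge3). unfold theta_cpc.
  assert (0 < x / (2 * INR Ntier + 1)) by (apply Rdiv_lt_0_compat; lra).
  assert (Heq : x / (2 * INR Ntier + 1) * (2 * INR Ntier + 1) = x) by (field; lra).
  split; [split|]; nra.
Qed.

Lemma th_mono a b : a <= b -> theta_cpc Ntier a <= theta_cpc Ntier b.
Proof.
  intros. assert (H3 := d_ge3). unfold theta_cpc, Rdiv.
  apply Rmult_le_compat_r; auto. left; apply Rinv_0_lt_compat; lra.
Qed.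

Lemma sin_tan_facts a b : 0 < a -> a <= b -> b <= PI / 6 ->
  0 < sin a /\ sin a <= sin b /\ 0 < cos b /\ cos b <= cos a /\
  0 < tan a /\ tan a <= tan b.
Proof.
  intros Ha Hab Hb. assert (HPI := PI_RGT_0).
  assert (0 < sin a) by (apply sin_gt_0; lra).
  assert (sin a <= sin b) by (apply sin_incr_1; lra).
  assert (0 < cos b) by (apply cos_gt_0; lra).
  assert (0 < cos a) by (apply cos_gt_0; lra).
  assert (cos b <= cos a) by (apply cos_decr_1; lra).
  unfold tan. repeat split; auto.
  - apply Rdiv_lt_0_compat; auto.
  - apply div_le_cross; auto. nra.
Qed.

Lemma K1_ge0 : 0 <= K1 NPD FF KPD.
Proof.
  unfold K1. apply Rmult_le_pos; [left; apply Rinv_0_lt_compat; lra|apply sqrt_pos].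
Qed.

Lemma K2_gt0 : 0 < K2 NPD FF KPD nCPC.
Proof.
  unfold K2. assert (HPI := PI_RGT_0). apply Rdiv_lt_0_compat.
  - apply Rmult_lt_0_compat; [nra|]. nra.
  - assert (0 < KPD ^ 2) by nra. nra.
Qed.

Lemma fL_mono : forall a b, 0 < a -> a <= b -> b <= PI / 2 ->
  f_L Ntier NPD FF KPD nCPC Lmax b <= f_L Ntier NPD FF KPD nCPC Lmax a.
Proof.
  intros a b Ha Hab Hb. unfold f_L.
  destruct (th_range a) as [[Ha1 Ha2] _]; [lra|].
  destruct (th_range b) as [[Hb1 Hb2] _]; [lra|].
  assert (Ht := th_mono a b Hab).
  destruct (sin_tan_facts (theta_cpc Ntier a) (theta_cpc Ntier b)) as
    (S1 & S2 & C1 & C2 & T1 & T2); auto.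
  set (sa := sin (theta_cpc Ntier a)) in *. set (sb := sin (theta_cpc Ntier b)) in *.
  set (ta := tan (theta_cpc Ntier a)) in *. set (tb := tan (theta_cpc Ntier b)) in *.
  apply Rmult_le_compat_l.
  - apply Rmult_le_pos; [apply K1_ge0| left; apply Rinv_0_lt_compat; lra].
  - apply div_le_cross; try nra.
    assert (Q1 : sa * ta <= sb * tb) by nra.
    assert (Q2 : nCPC * (sa * ta) <= nCPC * (sb * tb)) by (apply Rmult_le_compat_l; lra).
    assert (Q3 : sa * sb * ta <= sa * sb * tb) by (apply Rmult_le_compat_l; nra).
    nra.
Qed.

Lemma fA_mono : forall a b, 0 < a -> a <= b -> b <= PI / 2 ->
  f_A Ntier NPD FF KPD nCPC Amax b <= f_A Ntier NPD FF KPD nCPC Amax a.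
Proof.
  intros a b Ha Hab Hb. unfold f_A.
  destruct (th_range a) as [[Ha1 Ha2] Ha3]; [lra|].
  destruct (th_range b) as [[Hb1 Hb2] Hb3]; [lra|].
  assert (Ht := th_mono a b Hab).
  destruct (sin_tan_facts (theta_cpc Ntier a) (theta_cpc Ntier b)) as
    (S1 & S2 & C1 & C2 & T1 & T2); auto.
  destruct (tier_mono Ntier (theta_cpc Ntier a) (theta_cpc Ntier b)) as [M1 M2];
    auto; try lra.
  assert (HK := K2_gt0).
  assert (HKA : 0 < K2 NPD FF KPD nCPC / Amax) by (apply Rdiv_lt_0_compat; lra).
  apply Rmult_le_compat.
  - left; apply Rinv_0_lt_compat; lra.
  - apply sqrt_pos.
  - apply Rinv_le_contravar; lra.
  - apply sqrt_le_1_alt. apply Rmult_le_compat_l; lra.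
Qed.

Lemma fL_cont x : 0 < x <= PI / 2 -> continuity_pt (f_L Ntier NPD FF KPD nCPC Lmax) x.
Proof.
  intros Hx. apply continuity_pt_filterlim. apply (ex_derive_continuous (K := R_AbsRing) (V := R_NormedModule)).
  destruct (th_range x) as [[H1 H2] _]; auto.
  destruct (sin_tan_facts (theta_cpc Ntier x) (theta_cpc Ntier x)) as
    (S1 & S2 & C1 & C2 & T1 & T2); try lra.
  assert (H3 := d_ge3).
  unfold f_L, theta_cpc in *. unfold tan in *. auto_derive.
  repeat split; try lra.
  apply Rmult_integral_contrapositive; split; lra.
Qed.

Lemma fA_cont x : 0 < x <= PI / 2 -> continuity_pt (f_A Ntier NPD FF KPD nCPC Amax) x.
Proof.
  intros Hx. apply continuity_pt_filterlim. apply (ex_derive_continuous (K := R_AbsRing) (V := R_NormedModule)).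
  destruct (th_range x) as [[H1 H2] H4]; auto.
  destruct (sin_tan_facts (theta_cpc Ntier x) (theta_cpc Ntier x)) as
    (S1 & S2 & C1 & C2 & T1 & T2); try lra.
  destruct (tier_mono Ntier (theta_cpc Ntier x) (theta_cpc Ntier x)) as [M1 M2];
    auto; try lra.
  assert (HK := K2_gt0).
  assert (HKA : 0 < K2 NPD FF KPD nCPC / Amax) by (apply Rdiv_lt_0_compat; lra).
  assert (H3 := d_ge3).
  unfold f_A. unfold theta_cpc in *. auto_derive.
  repeat split; try lra.
  - apply tier_ex_derive.
  - apply Rmult_lt_0_compat; lra.
Qed.

Lemma L_equiv B x : 0 < B -> 0 < x <= PI / 2 ->
  (L_ADR Ntier NPD FF KPD nCPC B x <= Lmax <->
   f_L Ntier NPD FF KPD nCPC Lmax x <= B).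
Proof.
  intros HB Hx. unfold L_ADR, f_L.
  set (g := (nCPC + sin (theta_cpc Ntier x)) /
            (sin (theta_cpc Ntier x) * tan (theta_cpc Ntier x))).
  replace (K1 NPD FF KPD / B * g) with ((K1 NPD FF KPD * g) / B) by (field; lra).
  replace (K1 NPD FF KPD / Lmax * g) with ((K1 NPD FF KPD * g) / Lmax) by (field; lra).
  apply div_swap; auto.
Qed.

Lemma A_equiv B x : 0 < B -> 0 < x <= PI / 2 ->
  (A_ADR Ntier NPD FF KPD nCPC B x <= Amax <->
   f_A Ntier NPD FF KPD nCPC Amax x <= B).
Proof.
  intros HB Hx. unfold A_ADR, f_A.
  destruct (th_range x) as [[H1 H2] H4]; auto.
  destruct (sin_tan_facts (theta_cpc Ntier x) (theta_cpc Ntier x)) as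
    (S1 & S2 & C1 & C2 & T1 & T2); try lra.
  destruct (tier_mono Ntier (theta_cpc Ntier x) (theta_cpc Ntier x)) as [M1 M2];
    auto; try lra.
  assert (HK := K2_gt0).
  set (s := sin (theta_cpc Ntier x)) in *.
  set (h := 1 + tier_sum Ntier (theta_cpc Ntier x)).
  set (K := K2 NPD FF KPD nCPC) in *.
  assert (Hh : 0 < h) by (unfold h; lra).
  assert (HP : 0 < K * h) by nra.
  assert (Hs2 : 0 < s ^ 2) by nra.
  assert (Hq : 0 <= K / Amax * h).
  { left. apply Rmult_lt_0_compat; auto. apply Rdiv_lt_0_compat; lra. }
  assert (Hsq := sqrt_sqrt _ Hq). assert (Hsp := sqrt_pos (K / Amax * h)).
  set (r := sqrt (K / Amax * h)) in *.
  assert (Hinv : 0 < / s) by (apply Rinv_0_lt_compat; lra).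
  replace (K / (B ^ 2 * s ^ 2) * h) with ((K * h / s ^ 2) / B ^ 2) by (field; lra).
  rewrite div_swap; [|nra|lra].
  assert (Hf2 : (/ s * r) ^ 2 = K * h / s ^ 2 / Amax) by (field_simplify_eq; [|lra];
    replace (r ^ 2) with (r * r) by ring; rewrite Hsq; field; lra).
  assert (0 <= / s * r) by nra.
  split; intros HH.
  - rewrite <- Hf2 in HH. nra.
  - rewrite <- Hf2. nra.
Qed.

End Aux.

Theorem mainTheorem6
  (Ntier : nat) (NPD FF KPD nCPC Pt w RPD Gamma N0 FOVmin Lmax Amax : R)
  (HNtier : (1 <= Ntier)%nat) (HNPD : 1 <= NPD) (HNPDint : exists k : nat, NPD = INR k)
  (HFF : 0 < FF <= 1) (HKPD : 0 < KPD) (HnCPC : 1 <= nCPC) (HPt : 0 < Pt) (Hw : 0 < w)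
  (HRPD : 0 < RPD) (HGamma : 0 < Gamma) (HN0 : 0 < N0)
  (HFOVmin : 0 < FOVmin <= PI / 2) (HLmax : 0 < Lmax) (HAmax : 0 < Amax) :
  let inS := fun B FOV =>
    0 < B /\ 0 < FOV <= PI / 2 /\ FOVmin <= FOV /\
    L_ADR Ntier NPD FF KPD nCPC B FOV <= Lmax /\
    A_ADR Ntier NPD FF KPD nCPC B FOV <= Amax in
  let f_FOV := fun B =>
    Rbar_max2 (Finite FOVmin)
      (Rbar_max2 (gen_inv (f_L Ntier NPD FF KPD nCPC Lmax) B)
                 (gen_inv (f_A Ntier NPD FF KPD nCPC Amax) B)) in
  let inT := fun B FOV =>
    0 < B /\ 0 < FOV <= PI / 2 /\ Rbar_le (f_FOV B) (Finite FOV) in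
  let Rt := rate Ntier NPD FF KPD nCPC Pt w RPD Gamma N0 in
  (forall B FOV, inS B FOV <-> inT B FOV) /\
  (forall B FOV,
     (inS B FOV /\ forall B' FOV', inS B' FOV' -> Rt B' FOV' <= Rt B FOV) <->
     (inT B FOV /\ forall B' FOV', inT B' FOV' -> Rt B' FOV' <= Rt B FOV)).
Proof.
  intros inS f_FOV inT Rt.
  assert (P1 : forall B FOV, inS B FOV <-> inT B FOV).
  { intros B FOV. unfold inS, inT, f_FOV.
    rewrite !max2_le.
    split.
    - intros (HB & Hx & Hm & HL & HA). split; auto. split; auto.
      split; [simpl; auto|]. split.
      + apply gen_inv_char; auto.
        * apply fL_mono; auto.
        * apply fL_cont; auto.
        * apply L_equiv; auto.
      + apply gen_inv_char; auto.
        * apply fA_mono; auto.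
        * apply fA_cont; auto.
        * apply A_equiv; auto.
    - intros (HB & Hx & Hm & HL & HA). simpl in Hm.
      split; auto. split; auto. split; auto. split.
      + apply L_equiv; auto. apply (gen_inv_char _ B FOV); auto.
        * apply fL_mono; auto.
        * apply fL_cont; auto.
      + apply A_equiv; auto. apply (gen_inv_char _ B FOV); auto.
        * apply fA_mono; auto.
        * apply fA_cont; auto. }
  split; auto.
  intros B FOV. split; intros [H1 H2]; split.
  - apply P1; auto.
  - intros B' FOV' H. apply H2. apply P1; auto.
  - apply P1; auto.
  - intros B' FOV' H. apply H2. apply P1; auto.
Qed.
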